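(* Let $\Lambda$ be a Legendrian knot in $(\mathbb{R}^3,dz-y\,dx)$ with generic Lagrangian projection, and let $\epsilon:(\mathcal{A}_\Lambda,\partial_\Lambda)\to(\mathbb{Z}_2,0)$ be an augmentation. Then \[ MC(z)-PC^\epsilon(z)=(z+1)R(z), \] where $R(z)=\sum_k\#\{\text{finite bars in }F^\bullet\mathrm{LCH}^\epsilon_k(\Lambda)\}\,z^k$.
   Context: $(\mathcal{A}_\Lambda,\partial_\Lambda)$ is the Chekanov–Eliashberg DGA over $\mathbb{Z}_2$ of $\Lambda$, generated by the Reeb chords (double points of the Lagrangian projection) $q_1,\dots,q_n$, with $\mathbb{Z}$-grading $|q_i|$. An augmentation is an algebra map $\epsilon:\mathcal{A}_\Lambda\to\mathbb{Z}_2$ vanishing on nonzero degrees with $\epsilon\circ\partial_\Lambda=0$; $\partial_1^\epsilon$ is the linearized differential (length-one part of $\phi^\epsilon\partial_\Lambda(\phi^\epsilon)^{-1}$, $\phi^\epsilon(q_i)=q_i+\epsilon(q_i)$) on the vector space $A_\Lambda$ with basis $q_1,\dots,q_n$, and $\mathrm{LCH}^\epsilon_k(\Lambda)=H_k(A_\Lambda,\partial^\epsilon_1)$. Morse–Chekanov polynomial: $MC(z)=\sum_k\#\{\text{Reeb chords of grading }k\}z^k$. Poincaré–Chekanov polynomial: $PC^\epsilon(z)=\sum_k\dim_{\mathbb{Z}_2}\mathrm{LCH}^\epsilon_k(\Lambda)z^k$. Each $q_i$ has height $h(q_i)=\int_{\gamma_i}(dz-y\,dx)>0$ over its Reeb chord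 $\gamma_i$; $\partial_1^\epsilon$ strictly decreases height. $F^\bullet\mathrm{LCH}^\epsilon_k(\Lambda)$ is the persistence module $t\mapsto H_k(A^t,\partial_1^\epsilon)$ with $A^t$ spanned by the $q_i$ with $h(q_i)\le t$ and transfer maps induced by inclusion; it decomposes uniquely as a direct sum of interval modules (its barcode), and a finite bar is a summand supported on a bounded interval. *)

(* Defs.v *)
From HB Require Import structures.
From mathcomp Require Import all_boot all_order all_algebra.
From mathcomp Require Import reals.
Set Implicit Arguments. Unset Strict Implicit. Unset Printing Implicit Defensive.
Import Order.TTheory GRing.Theory Num.Theory.
Local Open Scope ring_scope.

Section CE.
Variable n : nat.

(* A word in the generators q_0..q_{n-1}, i.e. a monomial of A_Lambda. *)
Definition word := seq 'I_n.

(* The differential on generators: dq i is the list of words of d(q_i),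
   counted with multiplicity modulo 2 (coefficients in Z_2). *)
Variable dq : 'I_n -> seq word.

(* Extension of the differential to words by the (sign-free, Z_2) Leibniz
   rule; a sum of words is again represented by a list (mod 2). *)
Fixpoint dword (w : word) : seq word :=
  match w with
  | [::] => [::]
  | a :: w' => [seq v ++ w' | v <- dq a] ++ [seq a :: u | u <- dword w']
  end.

Definition dsum (s : seq word) : seq word := flatten (map dword s).

(* d o d = 0 on generators (hence on A_Lambda): every word occurs an even
   number of times in d(d q_i). *)
Definition dd_zero : Prop :=
  forall (i : 'I_n) (u : word), ~~ odd (count_mem u (dsum (dq i))).

Variable eps : 'I_n -> 'F_2.

Definition delta_row (a : 'I_n) : 'rV['F_2]_n := \row_j (j == a)%:R.

(* Length-one part of phi^eps(w) = prod_j (q_{w_j} + eps(q_{w_j})). *)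
Fixpoint lin (w : word) : 'rV['F_2]_n :=
  match w with
  | [::] => 0
  | a :: w' => (\prod_(b <- w') eps b) *: delta_row a + eps a *: lin w'
  end.

(* Matrix of the linearized differential acting on row vectors:
   d_1^eps (sum_i u_i q_i) = u *m linD. Row i = d_1^eps(q_i). *)
Definition linD : 'M['F_2]_n := \matrix_(i, j) (\sum_(w <- dq i) lin w) 0 j.

Definition is_augmentation (deg : 'I_n -> int) : Prop :=
  (forall i, deg i != 0 -> eps i = 0) /\
  (forall i, \sum_(w <- dq i) \prod_(b <- w) eps b = 0).

Variable deg : 'I_n -> int.

Definition mc_coef (k : int) : nat := #|[set i : 'I_n | deg i == k]|.

Definition Sdeg (k : int) : 'M['F_2]_n := diag_mx (\row_i (deg i == k)%:R).

Definition cycles (k : int) := (Sdeg k :&: kermx linD)%MS.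
Definition boundaries (k : int) := (Sdeg (k + 1) *m linD)%MS.

(* dim LCH^eps_k = dim (cycles / boundaries). *)
Definition pc_coef (k : int) : nat := (\rank (cycles k) - \rank (boundaries k))%N.

Variable R : realType.
Variable h : 'I_n -> R.

Definition Sfilt (k : int) (t : R) : 'M['F_2]_n :=
  diag_mx (\row_i ((deg i == k) && (h i <= t))%:R).

Definition fcycles (k : int) (t : R) := (Sfilt k t :&: kermx linD)%MS.
Definition fboundaries (k : int) (t : R) := (Sfilt (k + 1) t *m linD)%MS.

(* An interval-module decomposition (barcode) of the persistence module
   t |-> H_k(A^t, d_1^eps), given as an internal direct sum of interval
   submodules: bar j has (nonempty) support I j and is generated by the
   classes of the cycles row j (x t), t \in I j. *)
Definition is_barcode (k : int) (m : nat) (I : 'I_m -> interval R)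
    (x : R -> 'M['F_2]_(m, n)) : Prop :=
  (forall j, exists t, t \in I j) /\
  (forall t : R,
     let P : 'M['F_2]_m := diag_mx (\row_j (t \in I j)%:R) in
     (P *m x t <= fcycles k t)%MS /\
     (fcycles k t <= P *m x t + fboundaries k t)%MS /\
     (forall a : 'rV['F_2]_m,
        (a *m (P *m x t) <= fboundaries k t)%MS -> a *m P = 0)) /\
  (forall (j : 'I_m) (s t : R), s <= t -> s \in I j ->
     if t \in I j then (row j (x s) - row j (x t) <= fboundaries k t)%MS
     else (row j (x s) <= fboundaries k t)%MS).

End CE.

(* A bar is finite iff it is supported on a bounded interval. *)
Definition bounded_itv (R : numDomainType) (I : interval R) : bool :=
  match I with
  | Interval (BSide _ _) (BSide _ _) => true
  | _ => false
  end.

Definition nfinite (R : numDomainType) (m : nat) (I : 'I_m -> interval R) : nat :=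
  #|[set j : 'I_m | bounded_itv (I j)]|.

(* Main.v *)
Require Import Defs.
From HB Require Import structures.
From mathcomp Require Import all_boot all_order all_algebra.
From mathcomp Require Import reals.
From mathcomp Require Import zify.
Set Implicit Arguments. Unset Strict Implicit. Unset Printing Implicit Defensive.
Import Order.TTheory GRing.Theory Num.Theory.
Local Open Scope ring_scope.

Section Diag.
Variable F : fieldType.

Definition Dg m (f : 'I_m -> bool) : 'M[F]_m := diag_mx (\row_i (f i)%:R).
End Diag.
Arguments Dg {F m} f.
Section Diag2.
Context {F : fieldType}.
Local Notation Dg := (@Dg F _).

Lemma Dg_mul m (f g : 'I_m -> bool) : Dg f *m Dg g = Dg (fun i => f i && g i).
Proof.
rewrite /Dg mulmx_diag; congr diag_mx; apply/rowP => i; rewrite !mxE.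
by case: (f i); case: (g i); rewrite ?mulr1 ?mulr0 ?mul0r.
Qed.

Lemma Dg_eq m (f g : 'I_m -> bool) : f =1 g -> Dg f = Dg g.
Proof. by move=> H; rewrite /Dg; congr diag_mx; apply/rowP => i; rewrite !mxE H. Qed.

Lemma Dg_le m (f g : 'I_m -> bool) : (forall i, f i -> g i) -> (Dg f <= Dg g)%MS.
Proof.
move=> H; rewrite (Dg_eq (f := f) (g := fun i => f i && g i)).
  by rewrite -Dg_mul submxMl.
by move=> i; case E: (f i) => //=; rewrite (H _ E).
Qed.

Lemma Dg0 m (f : 'I_m -> bool) : (forall i, ~~ f i) -> Dg f = 0.
Proof.
move=> H; apply/matrixP => i j; rewrite !mxE.
by rewrite (negPf (H i)) mul0rn.
Qed.

Lemma rowDg m (a : 'rV[F]_m) f : a *m Dg f = \row_j (a 0 j * (f j)%:R).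
Proof. by rewrite /Dg mul_mx_diag; apply/rowP => j; rewrite !mxE. Qed.

Lemma rank_Dg m (f : 'I_m -> bool) : \rank (Dg f) = #|[set i | f i]|.
Proof.
elim: m f => [|m IH] f.
  by rewrite flatmx0 mxrank0 -sum1dep_card big_ord0.
change (\rank (diag_mx (\row_i (f i)%:R) : 'M[F]_(1 + m)) = #|[set i | f i]|).
have -> : (\row_i (f i)%:R : 'rV[F]_(1 + m)) = (row_mx (\row_(i < 1) (f ord0)%:R)
                             (\row_i (f (lift ord0 i))%:R)).
  apply/rowP => i; rewrite !mxE.
  case: splitP => j /= Hj.
    by rewrite !mxE; congr (_%:R); congr f; apply/val_inj; rewrite /= Hj; case: j {Hj} => [[]].
  rewrite !mxE; congr (_%:R); congr f; apply/val_inj; by rewrite /= Hj.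
rewrite (diag_mx_row (\row_(i < 1) (f ord0)%:R : 'rV[F]_1) (\row_i (f (lift ord0 i))%:R : 'rV[F]_m)) rank_diag_block_mx.
have -> : #|[set i | f i]| = (f ord0 + #|[set i : 'I_m | f (lift ord0 i)]|)%N.
  rewrite -!sum1dep_card (big_mkcond f) (big_mkcond (fun i => f (lift ord0 i))) big_ord_recl /=.
  by case: (f ord0).
rewrite -(IH (fun i => f (lift ord0 i))); congr (_ + _)%N.
case: (f ord0) => /=.
  have -> : diag_mx (\row_(i < 1) (1%:R : F)) = 1%:M.
    by apply/matrixP => i j; rewrite !mxE; rewrite !ord1.
  by rewrite mxrank1.
have -> : diag_mx (\row_(i < 1) (0%:R : F)) = 0.
  by apply/matrixP => i j; rewrite !mxE !ord1 /= mulr0n.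
by rewrite mxrank0.
Qed.

Lemma indep_rank n m r (W : 'M[F]_(r, n)) (f : 'I_m -> bool) (Y : 'M_(m, n)) :
  (forall a : 'rV_m, (a *m (Dg f *m Y) <= W)%MS -> a *m Dg f = 0) ->
  \rank (W + Dg f *m Y)%MS = (\rank W + #|[set j | f j]|)%N.
Proof.
move=> H.
have Hrk : \rank (Dg f *m Y) = #|[set j | f j]|.
  rewrite -rank_Dg -(mxrank_mul_ker (Dg f) Y).
  suff -> : (Dg f :&: kermx Y)%MS = 0 by rewrite mxrank0 addn0.
  apply/eqP; rewrite -submx0; apply/row_subP => i.
  have := row_sub i (Dg f :&: kermx Y)%MS; rewrite sub_capmx => /andP[].
  case/submxP => a ->; rewrite sub_kermx => /eqP Ha.
  rewrite (H a) ?sub0mx // ?mulmxA ?Ha ?sub0mx //.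
have := mxrank_sum_cap W (Dg f *m Y).
suff -> : \rank (W :&: Dg f *m Y)%MS = 0%N by rewrite addn0 Hrk.
apply/eqP; rewrite mxrank_eq0 -submx0; apply/row_subP => i.
have := row_sub i (W :&: Dg f *m Y)%MS; rewrite sub_capmx => /andP[HW].
case/submxP => a Ha; rewrite Ha in HW *.
by rewrite mulmxA (H a HW) mul0mx sub0mx.
Qed.

End Diag2.

Lemma rowDgM (F : fieldType) m n (f : 'I_m -> bool) (Y : 'M[F]_(m, n)) j :
  row j (Dg f *m Y) = (f j)%:R *: row j Y.
Proof. by rewrite /Dg mul_diag_mx; apply/rowP => k; rewrite !mxE. Qed.

Lemma rowB (F : fieldType) m n (A C : 'M[F]_(m, n)) j : row j (A - C) = row j A - row j C.
Proof. by apply/rowP => k; rewrite !mxE. Qed.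

Section Persist.
Variables (F : fieldType) (R : realDomainType) (n m : nat).
Variables (I : 'I_m -> interval R) (X : R -> 'M[F]_(m, n)) (Z B : R -> 'M[F]_n).
Definition al (t : R) := fun j => t \in I j.
Hypothesis HBZ : forall t, (B t <= Z t)%MS.
Hypothesis HZm : forall s t, s <= t -> (Z s <= Z t)%MS.
Hypothesis HBm : forall s t, s <= t -> (B s <= B t)%MS.
Hypothesis H1 : forall t, (Dg (al t) *m X t <= Z t)%MS.
Hypothesis H2 : forall t, (Z t <= Dg (al t) *m X t + B t)%MS.
Hypothesis H3 : forall t (a : 'rV_m), (a *m (Dg (al t) *m X t) <= B t)%MS -> a *m Dg (al t) = 0.
Hypothesis H4 : forall j s t, s <= t -> s \in I j ->
  if t \in I j then (row j (X s) - row j (X t) <= B t)%MS else (row j (X s) <= B t)%MS.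

Definition Jc t := #|[set j | t \in I j]|.
Definition births s t := #|[set j | (t \in I j) && (s \notin I j)]|.
Definition deaths s t := #|[set j | (s \in I j) && (t \notin I j)]|.

Lemma count_alive t : (Jc t + \rank (B t))%N = \rank (Z t).
Proof.
have -> : \rank (Z t) = \rank (B t + Dg (al t) *m X t)%MS.
  apply/eqP; rewrite eqn_leq; apply/andP; split; apply: mxrankS.
    by apply: submx_trans (H2 t) _; rewrite addsmx_sub addsmxSl addsmxSr.
  by rewrite addsmx_sub HBZ H1.
rewrite (indep_rank (@H3 t)) addnC.
by [].
Qed.

Lemma DgM_sub m' (f g : 'I_m -> bool) (Y : 'M[F]_(m, m')) :
  (forall i, f i -> g i) -> (Dg f *m Y <= Dg g *m Y)%MS.
Proof.
move=> H; rewrite (Dg_eq (f := f) (g := fun i => f i && g i)) -?Dg_mul -?mulmxA ?submxMl //.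
by move=> i; case E: (f i) => //=; rewrite (H _ E).
Qed.

Lemma births_le s t : s <= t -> (births s t + \rank (Z s) <= \rank (Z t))%N.
Proof.
move=> st.
pose fb := fun j => (t \in I j) && (s \notin I j).
have key : forall a : 'rV_m, (a *m (Dg fb *m X t) <= Z s)%MS -> a *m Dg fb = 0.
  move=> a Ha.
  have := submx_trans Ha (H2 s); case/sub_addsmxP => u Hu.
  pose fq := fun j => (s \in I j) && (t \in I j).
  have K : (Dg (al s) *m X s - Dg fq *m X t <= B t)%MS.
    apply/row_subP => j; rewrite rowB !rowDgM /al /fq.
    have := @H4 j s t st; case: (s \in I j) => /=.
      by case: (t \in I j) => /=; rewrite !scale1r ?scale0r ?subr0 => /(_ isT).
    by move=> _; rewrite !scale0r subr0 sub0mx.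
  pose d := a *m Dg fb - u.1 *m Dg fq.
  have dP : d *m Dg (al t) = d.
    rewrite /d mulmxBl -!mulmxA !Dg_mul.
    rewrite (@Dg_eq _ _ (fun i => fb i && al t i) fb) ?(@Dg_eq _ _ (fun i => fq i && al t i) fq) // => j;
    rewrite /fb /fq /al; by do 2 case: (_ \in I j).
  have : (d *m (Dg (al t) *m X t) <= B t)%MS.
    rewrite mulmxA dP /d mulmxBl -!mulmxA Hu.
    have -> : u.1 *m (Dg (al s) *m X s) + u.2 *m B s - u.1 *m (Dg fq *m X t)
       = u.1 *m (Dg (al s) *m X s - Dg fq *m X t) + u.2 *m B s.
      by rewrite mulmxBr addrAC.
    by rewrite addmx_sub // ?(submx_trans (submxMl _ _) K) // (submx_trans (submxMl _ _) (HBm st)).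
  move/H3; rewrite dP /d => /eqP; rewrite subr_eq0 => /eqP Hd.
  have -> : a *m Dg fb = a *m Dg fb *m Dg fb.
    by rewrite -mulmxA Dg_mul; congr (_ *m _); apply: Dg_eq => j; case: (fb j).
  rewrite Hd -mulmxA Dg_mul (Dg0 (f := fun i => fq i && fb i)) ?mulmx0 // => j.
  by rewrite /fq /fb; case: (s \in I j); rewrite ?andbF.
have := indep_rank key; rewrite addnC => <-.
apply: mxrankS; rewrite addsmx_sub HZm //.
apply: submx_trans (H1 t); apply: DgM_sub => j; rewrite /fb /al; by case/andP.
Qed.

Lemma deaths_le s t : s <= t -> (deaths s t + \rank (B s) <= \rank (B t))%N.
Proof.
move=> st.
pose fd := fun j => (s \in I j) && (t \notin I j).
have key : forall a : 'rV_m, (a *m (Dg fd *m X s) <= B s)%MS -> a *m Dg fd = 0.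
  move=> a Ha.
  have E : (Dg fd : 'M[F]_m) *m Dg (al s) = Dg fd.
    by rewrite Dg_mul; apply: Dg_eq => j; rewrite /fd /al; case: (s \in I j); rewrite ?andbT.
  have H := @H3 s (a *m Dg fd).
  have e1 : a *m Dg fd *m (Dg (al s) *m X s) = a *m (Dg fd *m X s).
    by rewrite !mulmxA -(mulmxA a) E.
  have e2 : a *m Dg fd *m Dg (al s) = a *m Dg fd by rewrite -mulmxA E.
  by rewrite -e2; apply: H; rewrite e1.
have := indep_rank key; rewrite addnC => <-.
apply: mxrankS; rewrite addsmx_sub HBm //.
apply/row_subP => j; rewrite rowDgM /fd.
have := @H4 j s t st; case: (s \in I j) => /=; last by rewrite scale0r sub0mx.
by case: (t \in I j) => /=; rewrite ?scale0r ?sub0mx // scale1r => /(_ isT).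
Qed.

Lemma card_swap s t : (Jc t + deaths s t = Jc s + births s t)%N.
Proof.
rewrite /Jc /deaths /births.
have E1 := cardsID [set j | t \in I j] [set j | s \in I j].
have E2 := cardsID [set j | s \in I j] [set j | t \in I j].
have -> : [set j | (s \in I j) && (t \notin I j)] = [set j | s \in I j] :\: [set j | t \in I j].
  by apply/setP => j; rewrite !inE andbC.
have -> : [set j | (t \in I j) && (s \notin I j)] = [set j | t \in I j] :\: [set j | s \in I j].
  by apply/setP => j; rewrite !inE andbC.
rewrite -E1 -E2 setIC; lia.
Qed.

Lemma dead_sub s t : s <= t ->
  (Dg (fun j => (s \in I j) && (t \notin I j)) *m X s <= B t)%MS.
Proof.
move=> st; apply/row_subP => j; rewrite rowDgM.
have := @H4 j s t st; case: (s \in I j) => /=; last by rewrite scale0r sub0mx.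
by case: (t \in I j) => /=; rewrite ?scale0r ?sub0mx // scale1r => /(_ isT).
Qed.

Lemma surv_sub s t : s <= t ->
  (Dg (fun j => (s \in I j) && (t \in I j)) *m X s
   - Dg (fun j => (s \in I j) && (t \in I j)) *m X t <= B t)%MS.
Proof.
move=> st; apply/row_subP => j; rewrite rowB !rowDgM.
have := @H4 j s t st; case: (s \in I j) => /=; last by rewrite !scale0r subr0 sub0mx.
by case: (t \in I j) => /=; rewrite ?scale0r ?subr0 ?sub0mx // !scale1r => /(_ isT).
Qed.

Lemma deaths_ge s t : s <= t -> (B t <= Z s)%MS ->
  (\rank (B t) <= deaths s t + \rank (B s))%N.
Proof.
move=> st BZ.
pose fd := fun j => (s \in I j) && (t \notin I j).
pose fq := fun j => (s \in I j) && (t \in I j).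
have key : forall a : 'rV_m, (a *m (Dg fd *m X s) <= B s)%MS -> a *m Dg fd = 0.
  move=> a Ha.
  have E : (Dg fd : 'M[F]_m) *m Dg (al s) = Dg fd.
    by rewrite Dg_mul; apply: Dg_eq => j; rewrite /fd /al; case: (s \in I j); rewrite ?andbT.
  have H := @H3 s (a *m Dg fd).
  have e1 : a *m Dg fd *m (Dg (al s) *m X s) = a *m (Dg fd *m X s).
    by rewrite !mulmxA -(mulmxA a) E.
  have e2 : a *m Dg fd *m Dg (al s) = a *m Dg fd by rewrite -mulmxA E.
  by rewrite -e2; apply: H; rewrite e1.
have := indep_rank key; rewrite addnC => <-.
apply: mxrankS; apply/row_subP => i.
have v1 := submx_trans (row_sub i (B t)) BZ.
have := submx_trans v1 (H2 s); case/sub_addsmxP => u Hu.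
have Ps : (Dg (al s) : 'M[F]_m) = Dg fq + Dg fd.
  apply/matrixP => p q; rewrite !mxE /fq /fd /al.
  by rewrite -mulrnDl -natrD; case: (s \in I p); case: (t \in I p).
have Eq : (Dg fq : 'M[F]_m) *m Dg (al t) = Dg fq.
  by rewrite Dg_mul; apply: Dg_eq => j; rewrite /fq /al; case: (s \in I j); case: (t \in I j).
have d0 : u.1 *m Dg fq = 0.
  have H := @H3 t (u.1 *m Dg fq).
  rewrite -Eq mulmxA; apply: H.
  have -> : u.1 *m Dg fq *m (Dg (al t) *m X t) = u.1 *m (Dg fq *m X t).
    by rewrite -!mulmxA (mulmxA (Dg fq)) Eq.
  have -> : u.1 *m (Dg fq *m X t) = row i (B t) - u.1 *m (Dg fd *m X s) - u.2 *m B s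
        - u.1 *m (Dg fq *m X s - Dg fq *m X t).
    rewrite Hu Ps mulmxDl mulmxDr mulmxBr.
    set a1 := u.1 *m _; set a2 := u.1 *m _; set a3 := u.2 *m _; set a4 := u.1 *m _.
    by rewrite [a2 + a4 + a3]addrAC addrK addrK opprB addrC subrK.
  rewrite !addmx_sub ?eqmx_opp ?row_sub //.
  - by apply: submx_trans (submxMl _ _) (dead_sub st).
  - by apply: submx_trans (submxMl _ _) (HBm st).
  - by apply: submx_trans (submxMl _ _) (surv_sub st).
rewrite Hu Ps mulmxDl mulmxDr mulmxA d0 mul0mx add0r addrC.
by rewrite addmx_sub_adds ?submxMl.
Qed.

Lemma births_eq s t : s <= t -> (B t <= Z s)%MS -> (births s t + \rank (Z s) = \rank (Z t))%N.
Proof.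
move=> st BZ; have := births_le st; have := deaths_le st; have := card_swap s t.
have := deaths_ge st BZ.
have := count_alive s; have := count_alive t; lia.
Qed.

Variables (hs : seq R) (t0 T : R).
Hypothesis Ht0 : forall c, c \in hs -> t0 < c.
Hypothesis HT : forall c, c \in hs -> c <= T.
Hypothesis Ht0T : t0 <= T.
Hypothesis HZ0 : forall t, t <= t0 -> \rank (Z t) = 0%N.
Hypothesis Hconst : forall s t, s <= t -> (forall c, c \in hs -> c <= t -> c <= s) ->
  Z s = Z t /\ B s = B t.
Hypothesis Hcrit : forall s t, s <= t -> (forall c, c \in hs -> c < t -> c <= s) ->
  (B t <= Z s)%MS.
Hypothesis Hne : forall j, exists t, t \in I j.

Lemma Jc0 t : t <= t0 -> Jc t = 0%N.
Proof. by move=> /HZ0 Z0; have := count_alive t; rewrite Z0; lia. Qed.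

Lemma card0_notin (P : pred 'I_m) j : #|[set j | P j]| = 0%N -> ~~ P j.
Proof. by move/eqP; rewrite cards_eq0 => /eqP /setP /(_ j); rewrite !inE => ->. Qed.

Lemma conv j a b c : a <= b -> b <= c -> a \in I j -> c \in I j -> b \in I j.
Proof.
move=> ab bc; case: (I j) => l r; rewrite !itv_boundlr => /andP[la _] /andP[_ cr].
apply/andP; split.
  by apply: le_trans la _; rewrite leBSide /= ab.
by apply: le_trans _ cr; rewrite leBSide /= bc.
Qed.

Lemma births_const s t : s <= t -> Z s = Z t -> births s t = 0%N.
Proof. by move=> st E; have := births_le st; rewrite E; lia. Qed.

Lemma deaths_const s t : s <= t -> B s = B t -> deaths s t = 0%N.
Proof. by move=> st E; have := deaths_le st; rewrite E; lia. Qed.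

Lemma telescope x0 L : path <=%R x0 L -> (forall c, c \in hs -> (c \in L) || (c <= x0)) ->
  (#|[set j | has (fun t => t \in I j) (x0 :: L)]| + \rank (Z x0)
   = Jc x0 + \rank (Z (last x0 L)))%N.
Proof.
elim: L x0 => [|y L IH] x0 /=.
  move=> _ _; rewrite /Jc; congr (_ + _)%N; apply: eq_card => j; by rewrite !inE orbF.
move=> /andP[xy pL] Hc.
have yL : all (fun z => y <= z) L by apply: order_path_min pL; exact: le_trans.
have Hc' : forall c, c \in hs -> (c \in L) || (c <= y).
  move=> c /Hc; rewrite inE; case/orP; first case/orP.
  - by move/eqP ->; rewrite lexx orbT.
  - by move ->.
  - by move=> cx; rewrite (le_trans cx xy) orbT.
have IH' := IH y pL Hc'.
have BZ : (B y <= Z x0)%MS.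
  apply: Hcrit => // c cin cy; move: (Hc c cin); rewrite inE; case/orP => //.
  case/orP.
    by move/eqP => E; rewrite E ltxx in cy.
  by move=> cL; move/allP: yL => /(_ c cL) yc; have := lt_le_trans cy yc; rewrite ltxx.
have be := births_eq xy BZ.
have cs := card_swap x0 y.
set S := [set j | (x0 \in I j) || ((y \in I j) || has (fun t => t \in I j) L)].
set S' := [set j | (y \in I j) || has (fun t => t \in I j) L].
have E := cardsID S' S.
have E1 : S :&: S' = S' by apply/setP => j; rewrite in_setI !in_set andb_idl // => ->; rewrite orbT.
have E2 : S :\: S' = [set j | (x0 \in I j) && (y \notin I j)].
  apply/setP => j; rewrite in_setD !in_set.
  case Hy: (y \in I j) => /=; first by rewrite andbF.
  rewrite andbT; case Hx: (x0 \in I j) => /=; last by case: (has _ _).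
  rewrite andbT; apply/negP => /hasP [z zL zI].
  move/allP: yL => /(_ z zL) yz.
  by have := conv xy yz Hx zI; rewrite Hy.
rewrite E1 E2 in E; move: IH'; rewrite /= -/S' => IH'; rewrite /deaths in cs; set D := #|[set j | _ & _]| in E cs. move: E IH' cs be; move: #|S| #|S'| D (Jc x0) (Jc y) (births x0 y) (\rank (Z x0)) (\rank (Z y)) (\rank (Z (last y L))) => a b c d e f g h i. lia.
Qed.

Lemma big_max_props s0 : t0 <= s0 ->
  let g := \big[Num.max/t0]_(c <- hs | c <= s0) c in
  [/\ g \in t0 :: hs, g <= s0 & forall c, c \in hs -> c <= s0 -> c <= g].
Proof.
move=> ts g; split.
- rewrite /g big_seq_cond; apply: (big_ind (fun x => x \in t0 :: hs)).
  + by rewrite inE eqxx.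
  + by move=> x y Hx Hy; rewrite /Num.max; case: ifP.
  + by move=> c /andP[cin _]; rewrite inE cin orbT.
- rewrite /g; apply: (big_ind (fun x => x <= s0)) => //.
  by move=> x y Hx Hy; rewrite ge_max Hx Hy.
- rewrite /g => c; elim: hs => [|a l IHl] //= ; rewrite big_cons inE.
  case/orP => [/eqP -> ->|cl cs].
    by rewrite le_max lexx.
  case: ifP => _; last exact: IHl.
  by rewrite le_max (IHl cl cs) orbT.
Qed.

Lemma nbounded : #|[set j | bounded_itv (I j)]| = \rank (B T).
Proof.
pose S := sort <=%R hs.
pose G := rcons S T.
have pG : path <=%R t0 G.
  rewrite /G rcons_path path_sortedE; last exact: le_trans.
  rewrite sort_sorted ?andbT; last by move=> a b; exact: le_total.
  apply/andP; split.
    by apply/allP => c; rewrite mem_sort => /Ht0 /ltW.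
  have := mem_last t0 S; rewrite inE; case/orP => [/eqP -> //|].
  by rewrite mem_sort => /HT.
have cG : forall c, c \in hs -> (c \in G) || (c <= t0).
  by move=> c cin; rewrite /G mem_rcons inE mem_sort cin orbT.
have tel := telescope pG cG.
rewrite /G last_rcons in tel.
have allh : forall j, has (fun t => t \in I j) (t0 :: G).
  move=> j; have [s0 s0I] := Hne j.
  have [s0t0|t0s0] := leP s0 t0.
    by have := card0_notin j (Jc0 s0t0); rewrite s0I.
  have [gin gs gmax] := big_max_props (ltW t0s0).
  set g := \big[Num.max/t0]_(c <- hs | c <= s0) c in gin gs gmax.
  have [EZ _] := Hconst gs gmax.
  have := card0_notin j (births_const gs EZ); rewrite s0I /= => gI.
  suff : has (fun t => t \in I j) (t0 :: G) by []. apply/hasP; exists g => //; last by move: gI; rewrite negbK.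
  move: gin; rewrite !inE /G mem_rcons inE mem_sort; case/orP => -> //; by rewrite !orbT.
have Em : #|[set j | has (fun t => t \in I j) (t0 :: G)]| = m.
  by rewrite -[RHS]card_ord; apply: eq_card => j; rewrite !inE allh.
rewrite Em (Jc0 (lexx t0)) HZ0 // addn0 add0n in tel.
have bnd : forall j, bounded_itv (I j) = (T \notin I j).
  move=> j; have [s0 s0I] := Hne j.
  have t0s0 : t0 < s0.
    rewrite ltNge; apply/negP => s0t0.
    by have := card0_notin j (Jc0 s0t0); rewrite s0I.
  case TI: (T \in I j) => /=.
    case Ej: (I j) => [l r]; case: l Ej => [bl l0|bl] Ej //; case: r Ej => [br r0|br] Ej //=.
    pose y := Num.max T r0 + 1.
    have My : Num.max T r0 < y by rewrite /y ltrDl ltr01.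
    have Ty : T <= y by apply: ltW; apply: le_lt_trans My; rewrite le_max lexx.
    have r0y : r0 < y by apply: le_lt_trans My; rewrite le_max lexx orbT.
    have [_ EB] := Hconst Ty (fun c cin _ => HT cin).
    have := card0_notin j (deaths_const Ty EB); rewrite /= TI /= negbK Ej.
    rewrite itv_boundlr => /andP[_]; case: br Ej => _ /=; rewrite bnd_simp => yr.
      by have := lt_trans yr r0y; rewrite ltxx.
    by have := le_lt_trans yr r0y; rewrite ltxx.
  have s0T : s0 < T.
    rewrite ltNge; apply/negP => Ts0.
    have [EZ _] := Hconst Ts0 (fun c cin _ => HT cin).
    by have := card0_notin j (births_const Ts0 EZ); rewrite s0I TI.
  have t0nI : t0 \notin I j by have := card0_notin j (Jc0 (lexx t0)).
  move: TI s0I t0nI; case: (I j) => l r; rewrite !itv_boundlr.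
  case: l => [bl l0|[]]; case: r => [br r0|[]] //=; rewrite ?bnd_simp.
  - by move=> _ /andP[_ /eqP].
  - move=> TI /andP[ls _] _.
    have lT : (BSide bl l0 <= BLeft T)%O by apply: le_trans ls _; rewrite leBSide /= ltW.
    by rewrite lT in TI.
  - move=> _ sr /negP H; exfalso; apply: H; apply: le_trans _ sr; by rewrite leBSide /= ltW.
have -> : [set j | bounded_itv (I j)] = ~: [set j | T \in I j].
  by apply/setP => j; rewrite !inE bnd.
have := cardsC [set j | T \in I j]; rewrite card_ord.
have := count_alive T; rewrite /Jc; set A := #|[set j | T \in I j]|; set C := #|~: _|; move: tel; lia.
Qed.

End Persist.

Lemma F2_addxx n (x : 'rV['F_2]_n) : x + x = 0.
Proof.
have -> : x + x = (1 + 1 : 'F_2) *: x by rewrite scalerDl scale1r.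
have -> : (1 + 1 : 'F_2) = 0 by apply/val_inj.
by rewrite scale0r.
Qed.

Lemma sum_even (T : eqType) n (F : T -> 'rV['F_2]_n) (s : seq T) :
  (forall u, ~~ odd (count_mem u s)) -> \sum_(x <- s) F x = 0.
Proof.
move: {2}(size s) (leqnn (size s)) => N; elim: N s => [|N IH] [|x s'] //=; 
  rewrite ?big_nil // => Hs Hc.
have xs' : x \in s'.
  have := Hc x; rewrite /= eqxx /= -has_pred1 has_count.
  by case: (count_mem x s') => //=; rewrite negbK.
have P := perm_to_rem xs'.
rewrite big_cons (perm_big _ P) big_cons addrA F2_addxx add0r.
apply: IH.
  by move: Hs; rewrite (perm_size P) /= ltnS => /ltnW.
move=> u; have := Hc u; rewrite /= (permP P) /=.
by rewrite addnA !oddD; case: (x == u); case: (odd _).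
Qed.

Section DD.
Variable n : nat.
Variable dq : 'I_n -> seq (word n).
Variable eps : 'I_n -> 'F_2.

Definition epsw (w : word n) := \prod_(b <- w) eps b.
Definition Lsum (s : seq (word n)) := \sum_(w <- s) lin eps w.

Lemma lin_cat v w : lin eps (v ++ w) = epsw w *: lin eps v + epsw v *: lin eps w.
Proof.
elim: v => [|b v IH] /=; first by rewrite scaler0 add0r /epsw big_nil scale1r.
rewrite IH /epsw big_cat !big_cons /= scalerDr !scalerDr !scalerA.
by rewrite addrA; congr (_ *: _ + _ *: _ + _ *: _); apply: mulrC.
Qed.

Hypothesis aug2 : forall i, \sum_(w <- dq i) epsw w = 0.

Lemma E_dword w : \sum_(u <- dword dq w) epsw u = 0.
Proof.
elim: w => [|a w IH] /=; first by rewrite big_nil.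
rewrite big_cat !big_map /=.
have -> : \sum_(j <- dq a) epsw (j ++ w) = (\sum_(j <- dq a) epsw j) * epsw w.
  by rewrite mulr_suml; apply: eq_bigr => v _; rewrite /epsw big_cat.
have -> : \sum_(j <- dword dq w) epsw (a :: j) = eps a * \sum_(j <- dword dq w) epsw j.
  by rewrite mulr_sumr; apply: eq_bigr => v _; rewrite /epsw big_cons.
by rewrite aug2 IH mul0r mulr0 addr0.
Qed.

Lemma delta_linD a : delta_row a *m linD dq eps = Lsum (dq a).
Proof.
apply/rowP => j; rewrite !mxE (bigD1 a) //= big1 ?addr0.
  by rewrite !mxE eqxx mul1r.
by move=> i /negPf Hi; rewrite !mxE Hi mul0r.
Qed.

Lemma L_dword w : Lsum (dword dq w) = lin eps w *m linD dq eps.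
Proof.
elim: w => [|a w IH] /=; first by rewrite mul0mx /Lsum big_nil.
rewrite /Lsum big_cat !big_map /=.
under eq_bigr => v _ do rewrite lin_cat.
under [X in _ + X]eq_bigr => v _ do rewrite /=.
rewrite big_split /= -!scaler_suml.
rewrite [X in _ + _ + X]big_split /= -scaler_suml -scaler_sumr.
rewrite aug2 E_dword scale0r addr0 scale0r add0r.
rewrite -scaler_sumr -/(Lsum (dq a)) -/(Lsum (dword dq w)) IH -delta_linD.
by rewrite mulmxDl -!scalemxAl.
Qed.

Lemma linD2 : dd_zero dq -> linD dq eps *m linD dq eps = 0.
Proof.
move=> Hdd; apply/row_matrixP => i; rewrite row_mul row0.
have -> : row i (linD dq eps) = Lsum (dq i).
  by apply/rowP => j; rewrite !mxE.
rewrite /Lsum mulmx_suml.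
under eq_bigr => w _ do rewrite -L_dword.
rewrite /Lsum -(big_map (dword dq) xpredT (fun s => \sum_(w <- s) lin eps w)) -big_flatten /=.
exact: sum_even (Hdd i).
Qed.
End DD.

Section Main.
Variables (R : realType) (n : nat) (deg : 'I_n -> int) (h : 'I_n -> R)
    (dq : 'I_n -> seq (seq 'I_n)) (eps : 'I_n -> 'F_2).
Hypothesis h_pos : forall i, 0 < h i.
Hypothesis h_grading : forall i, forall w, w \in dq i -> \sum_(b <- w) deg b = deg i - 1.
Hypothesis h_action : forall i, forall w, w \in dq i -> \sum_(b <- w) h b < h i.
Hypothesis h_dd : dd_zero dq.
Hypothesis h_aug : is_augmentation dq eps deg.

Lemma deg0 a : eps a != 0 -> deg a = 0.
Proof. by move=> ea; case: (deg a =P 0) => // /eqP /(h_aug.1 a) E; rewrite E eqxx in ea. Qed.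

Lemma epsw_deg w : epsw eps w != 0 -> \sum_(b <- w) deg b = 0.
Proof.
elim: w => [|a w IH]; first by rewrite big_nil.
rewrite /epsw !big_cons mulf_eq0 negb_or => /andP[ea ew].
by rewrite (deg0 ea) add0r IH.
Qed.

Lemma lin_supp w j : lin eps w 0 j != 0 -> (j \in w) && (\sum_(b <- w) deg b == deg j).
Proof.
elim: w => [|a w IH] /=; first by rewrite mxE eqxx.
rewrite !mxE big_cons inE.
have [E1|E1] := eqVneq (\prod_(b <- w) eps b * (j == a)%:R) 0.
  rewrite E1 add0r mulf_eq0 negb_or => /andP[ea /IH /andP[-> /eqP <-]].
  by rewrite orbT /= (deg0 ea) add0r.
move=> _; move: E1; rewrite mulf_eq0 negb_or => /andP[ew].
case: (j =P a) => [->|] // _.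
by rewrite /= (epsw_deg ew) addr0.
Qed.

Lemma sum_ge_mem (w : seq 'I_n) j : j \in w -> h j <= \sum_(b <- w) h b.
Proof.
move=> jw; rewrite (perm_big _ (perm_to_rem jw)) big_cons lerDl.
by apply: sumr_ge0 => b _; apply: ltW.
Qed.

Lemma linD_supp i j : linD dq eps i j != 0 -> deg j = deg i - 1 /\ h j < h i.
Proof.
rewrite mxE summxE => Hne.
have : has (fun w => lin eps w 0 j != 0) (dq i).
  apply/negPn/negP => /hasPn H; move: Hne; rewrite big1_seq ?eqxx // => w /andP[_ /H].
  by rewrite negbK => /eqP.
case/hasP => w win /lin_supp /andP[jw /eqP Ed].
split; first by rewrite -Ed (h_grading win).
exact: le_lt_trans (sum_ge_mem jw) (h_action win).
Qed.

Lemma filt_d k s t : (forall i j, h i <= t -> h j < h i -> h j <= s) ->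
  (Sfilt deg h (k + 1) t *m linD dq eps <= Sfilt deg h k s)%MS.
Proof.
move=> Hst.
have -> : Sfilt deg h (k + 1) t *m linD dq eps
   = Sfilt deg h (k + 1) t *m linD dq eps *m Sfilt deg h k s.
  apply/matrixP => i j; rewrite /Sfilt mul_mx_diag !mul_diag_mx.
  have Hs := @linD_supp i j; move: Hs.
  set L := linD dq eps; rewrite !mxE => Hs.
  set v := (\sum_(w <- dq i) lin eps w) 0 j in Hs *.
  have [->|/Hs [dj hj]] := eqVneq v 0; first by rewrite !mulr0 mul0r.
  case Ci: ((deg i == k + 1) && (h i <= t)); last by rewrite !mul0r.
  move/andP: Ci => [/eqP di hi].
  by rewrite dj di addrK eqxx (Hst _ _ hi hj) mulr1.
exact: submxMl.
Qed.

Lemma linD2' : linD dq eps *m linD dq eps = 0.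
Proof. exact: linD2 h_aug.2 h_dd. Qed.

Lemma Sfilt_ge k t : (forall i, h i <= t) -> Sfilt deg h k t = Sdeg deg k.
Proof. by move=> H; congr diag_mx; apply/rowP => i; rewrite !mxE H andbT. Qed.

Lemma Sfilt_eq k s t : (forall i, (h i <= s) = (h i <= t)) -> Sfilt deg h k s = Sfilt deg h k t.
Proof. by move=> H; congr diag_mx; apply/rowP => i; rewrite !mxE H. Qed.

Lemma B_sub_Z k s t : (forall i j, h i <= t -> h j < h i -> h j <= s) ->
  (fboundaries dq eps deg h k t <= fcycles dq eps deg h k s)%MS.
Proof.
move=> H; rewrite sub_capmx filt_d //= sub_kermx /fboundaries -mulmxA linD2' mulmx0 //.
Qed.

Variables (m : nat) (I : 'I_m -> interval R) (x : R -> 'M['F_2]_(m, n)) (k : int).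
Hypothesis h_bar : is_barcode dq eps deg h k I x.

Lemma NB : nfinite I = \rank (boundaries dq eps deg k).
Proof.
have [Hne [Ht Hc]] := h_bar.
pose Z t := fcycles dq eps deg h k t.
pose B t := fboundaries dq eps deg h k t.
pose T := \sum_i h i.
have hT : forall i, h i <= T.
  move=> i; rewrite /T (bigD1 i) //= lerDl; apply: sumr_ge0 => j _; exact: ltW.
have -> : boundaries dq eps deg k = B T.
  by rewrite /B /fboundaries /boundaries Sfilt_ge.
rewrite /nfinite.
apply: (@nbounded _ _ _ _ I x Z B _ _ _ _ _ _ Hc [seq h i | i <- enum 'I_n] 0 T).
- move=> t; apply: B_sub_Z => i j hi /ltW hj; exact: le_trans hj hi.
- move=> s t st; apply: capmxS => //; apply: Dg_le => i /andP[-> /= hs].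
  exact: le_trans hs st.
- move=> s t st; apply: submxMr; apply: Dg_le => i /andP[-> /= hs].
  exact: le_trans hs st.
- by move=> t; have [] := Ht t.
- by move=> t; have [_ []] := Ht t.
- by move=> t; have [_ []] := Ht t.
- by move=> c /mapP [i _ ->].
- by move=> c /mapP [i _ ->].
- by apply: sumr_ge0 => i _; apply: ltW.
- move=> t t0; apply/eqP; rewrite -leqn0.
  rewrite /Z /fcycles; have -> : Sfilt deg h k t = 0.
    apply: Dg0 => i; rewrite negb_and; apply/orP; right.
    by rewrite -ltNge (le_lt_trans t0 (h_pos i)).
  by apply: leq_trans (mxrankS (capmxSl _ _)) _; rewrite mxrank0.
- move=> s t st Hst.
  have E : forall k', Sfilt deg h k' s = Sfilt deg h k' t.
    move=> k'; apply: Sfilt_eq => i; apply/idP/idP => [hs|ht].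
      exact: le_trans hs st.
    by apply: Hst => //; apply/mapP; exists i => //; rewrite mem_enum.
  by rewrite /Z /B /fcycles /fboundaries !E.
- move=> s t st Hst; apply: B_sub_Z => i j hi hj.
  apply: Hst; first by apply/mapP; exists j => //; rewrite mem_enum.
  exact: lt_le_trans hj hi.
- exact: Hne.
Qed.

End Main.

Unset Implicit Arguments.

Theorem theorem6p1 (R : realType) (n : nat) (deg : 'I_n -> int) (h : 'I_n -> R)
    (dq : 'I_n -> seq (seq 'I_n)) (eps : 'I_n -> 'F_2)
    (h_pos : forall i, 0 < h i)
    (h_grading : forall i, forall w, w \in dq i -> \sum_(b <- w) deg b = deg i - 1)
    (h_action : forall i, forall w, w \in dq i -> \sum_(b <- w) h b < h i)
    (h_dd : dd_zero dq)
    (h_aug : is_augmentation dq eps deg)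
    (m : int -> nat) (I : forall k : int, 'I_(m k) -> interval R)
    (x : forall k : int, R -> 'M['F_2]_(m k, n))
    (h_bar : forall k : int, is_barcode dq eps deg h k (I k) (x k)) :
  forall k : int,
    (mc_coef deg k)%:Z - (pc_coef dq eps deg k)%:Z
    = (nfinite (I (k - 1)))%:Z + (nfinite (I k))%:Z.
Proof.
move=> k.
have NBk := NB h_pos h_grading h_action h_dd h_aug (h_bar k).
have NBk1 := NB h_pos h_grading h_action h_dd h_aug (h_bar (k - 1)).
pose T := \sum_i h i.
have hT : forall i, h i <= T.
  move=> i; rewrite /T (bigD1 i) //= lerDl; apply: sumr_ge0 => j _; exact: ltW.
have BZ : (boundaries dq eps deg k <= cycles dq eps deg k)%MS.
  have := @B_sub_Z _ _ _ _ _ _ h_pos h_grading h_action h_dd h_aug k T T (fun i j _ _ => hT j).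
  by rewrite /fboundaries /fcycles !Sfilt_ge.
have rk := mxrank_mul_ker (Sdeg deg k) (linD dq eps).
have Eb : boundaries dq eps deg (k - 1) = Sdeg deg k *m linD dq eps by rewrite /boundaries subrK.
have Emc : mc_coef deg k = \rank (Sdeg deg k).
  by rewrite /mc_coef -(rank_Dg (F := 'F_2) (fun i => deg i == k)).
rewrite NBk NBk1 Eb Emc /pc_coef.
have := mxrankS BZ; move: rk; rewrite /cycles.
set a := \rank (Sdeg deg k *m _); set b := \rank (Sdeg deg k :&: _)%MS.
set c := \rank (Sdeg deg k); set d := \rank (boundaries _ _ _ _).
lia.
Qed.
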